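(* Let $\mathbf x_1,\dots,\mathbf x_l\in\mathbb{R}^n$ and $y_1,\dots,y_l\in\{1,-1\}$; set $\bar{\mathbf x}_i=y_i\mathbf x_i$ and let $\overline{\mathbf X}\in\mathbb{R}^{l\times n}$ have $i$-th row $\bar{\mathbf x}_i^T$. For $C>0$ let $\mathbf w^*(C)$ be the optimal solution of the SVM problem $$\min_{\mathbf w}\tfrac12\|\mathbf w\|^2+C\sum_{i=1}^l\big[1-\mathbf w^T(y_i\mathbf x_i)\big]_+,$$ and $\theta^*(C)$ an optimal solution of its dual $\min_{\theta\in[0,1]^l}\frac C2\|\overline{\mathbf X}^T\theta\|^2-\sum_{i=1}^l\theta_i$. Let $0<C_1<\dots<C_{\mathcal K}$ and suppose $\mathbf w^*(C_k)$ is known for some integer $1\le k<\mathcal K$. If $$\tfrac{C_k+C_{k+1}}{2C_k}\langle\mathbf w^*(C_k),\bar{\mathbf x}_i\rangle-\tfrac{C_{k+1}-C_k}{2C_k}\|\mathbf w^*(C_k)\|\,\|\bar{\mathbf x}_i\|>1,$$ then $[\theta^*(C_{k+1})]_i=0$, i.e., $i\in\mathcal R$ (at $C=C_{k+1}$). Similarly, if $$\tfrac{C_k+C_{k+1}}{2C_k}\langle\mathbf w^*(C_k),\bar{\mathbf x}_i\rangle+\tfrac{C_{k+1}-C_k}{2C_k}\|\mathbf w^*(C_k)\|\,\|\bar{\mathbf x}_i\|<1,$$ then $[\theta^*(C_{k+1})]_i=1$, i.e., $i\in\mathcal L$.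
   Context: $[t]_+=\max\{t,0\}$. Primal and dual solutions satisfy $\mathbf w^*(C)=C\overline{\mathbf X}^T\theta^*(C)$. At parameter $C$: $\mathcal R=\{i:\langle\mathbf w^*(C),\bar{\mathbf x}_i\rangle>1\}$ and $\mathcal L=\{i:\langle\mathbf w^*(C),\bar{\mathbf x}_i\rangle<1\}$. *)

(* Defs.v *)
From HB Require Import structures.
From mathcomp Require Import all_boot all_order all_algebra.
From mathcomp Require Import reals.
Set Implicit Arguments. Unset Strict Implicit. Unset Printing Implicit Defensive.
Import Order.TTheory GRing.Theory Num.Theory.
Local Open Scope ring_scope.

Section SVM.
Variable R : realType.

Definition dotv n (u v : 'rV[R]_n) : R := \sum_(j < n) u 0 j * v 0 j.
Definition norm2 n (v : 'rV[R]_n) : R := Num.sqrt (dotv v v).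

Definition hinge (t : R) : R := Num.max t 0.

Definition Xbar l n (x : 'I_l -> 'rV[R]_n) (y : 'I_l -> R) : 'M[R]_(l, n) :=
  \matrix_(i < l, j < n) (y i * x i 0 j).

Definition xbar l n (x : 'I_l -> 'rV[R]_n) (y : 'I_l -> R) (i : 'I_l) : 'rV[R]_n :=
  row i (Xbar x y).

Definition svm_primal l n (x : 'I_l -> 'rV[R]_n) (y : 'I_l -> R) (C : R)
    (w : 'rV[R]_n) : R :=
  (norm2 w) ^+ 2 / 2 + C * \sum_(i < l) hinge (1 - dotv w (xbar x y i)).

Definition is_primal_opt l n (x : 'I_l -> 'rV[R]_n) (y : 'I_l -> R) (C : R)
    (w : 'rV[R]_n) : Prop :=
  forall v : 'rV[R]_n, svm_primal x y C w <= svm_primal x y C v.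

(* theta is a row vector in R^l; Xbar^T theta is represented as theta *m Xbar *)
Definition in_box l (th : 'rV[R]_l) : Prop := forall i, 0 <= th 0 i <= 1.

Definition svm_dual l n (x : 'I_l -> 'rV[R]_n) (y : 'I_l -> R) (C : R)
    (th : 'rV[R]_l) : R :=
  C / 2 * (norm2 (th *m Xbar x y)) ^+ 2 - \sum_(i < l) th 0 i.

Definition is_dual_opt l n (x : 'I_l -> 'rV[R]_n) (y : 'I_l -> R) (C : R)
    (th : 'rV[R]_l) : Prop :=
  in_box th /\ forall th' : 'rV[R]_l, in_box th' -> svm_dual x y C th <= svm_dual x y C th'.

End SVM.

(* Main.v *)
Require Import Defs.
From HB Require Import structures.
From mathcomp Require Import all_boot all_order all_algebra.
From mathcomp Require Import reals.
From mathcomp Require Import ring lra.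
Import Order.TTheory GRing.Theory Num.Theory.
Local Open Scope ring_scope.

Section L.
Context {R : realType} {n : nat}.
Implicit Types u v w : 'rV[R]_n.

Lemma dotvC u v : dotv u v = dotv v u.
Proof. by rewrite /dotv; apply: eq_bigr => j _; rewrite mulrC. Qed.

Lemma dotvDl u v w : dotv (u + v) w = dotv u w + dotv v w.
Proof. by rewrite /dotv -big_split; apply: eq_bigr => j _; rewrite mxE mulrDl. Qed.

Lemma dotvZl a u v : dotv (a *: u) v = a * dotv u v.
Proof. by rewrite /dotv mulr_sumr; apply: eq_bigr => j _; rewrite mxE mulrA. Qed.

Lemma dotvNl u v : dotv (- u) v = - dotv u v.
Proof. by rewrite -scaleN1r dotvZl mulN1r. Qed.

Lemma dotvBl u v w : dotv (u - v) w = dotv u w - dotv v w.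
Proof. by rewrite dotvDl dotvNl. Qed.

Lemma dotvDr u v w : dotv w (u + v) = dotv w u + dotv w v.
Proof. by rewrite dotvC dotvDl !(dotvC w). Qed.
Lemma dotvZr a u v : dotv v (a *: u) = a * dotv v u.
Proof. by rewrite dotvC dotvZl dotvC. Qed.
Lemma dotvBr u v w : dotv w (u - v) = dotv w u - dotv w v.
Proof. by rewrite dotvC dotvBl !(dotvC w). Qed.

Lemma dotv_ge0 u : 0 <= dotv u u.
Proof. by apply: sumr_ge0 => j _; rewrite -expr2 sqr_ge0. Qed.

Lemma norm2_ge0 u : 0 <= norm2 u.
Proof. exact: sqrtr_ge0. Qed.

Lemma norm2_sq u : norm2 u ^+ 2 = dotv u u.
Proof. by rewrite /norm2 sqr_sqrtr // dotv_ge0. Qed.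

Lemma dotv_eq0 u : dotv u u = 0 -> u = 0.
Proof.
move=> h; apply/rowP => j; rewrite mxE.
have hj : u 0 j * u 0 j = 0.
  apply: (@psumr_eq0P R _ predT (fun j => u 0 j * u 0 j)) => //.
  by move=> k _; rewrite -expr2 sqr_ge0.
by move/eqP: hj; rewrite mulf_eq0 orbb => /eqP.
Qed.

Lemma cauchy_schwarz u v : dotv u v <= norm2 u * norm2 v.
Proof.
set p := dotv u u; set s := dotv v v; set t := dotv u v.
have hp : 0 <= p by apply: dotv_ge0.
have hs : 0 <= s by apply: dotv_ge0.
have key : t ^+ 2 <= p * s.
  have [s0|spos] := eqVneq s 0.
    have v0 : v = 0 by exact: dotv_eq0.
    have -> : t = 0 by rewrite /t v0 /dotv big1 // => j _; rewrite mxE mulr0.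
    by rewrite expr0n /= mulr_ge0.
  have spos' : 0 < s by rewrite lt_def spos hs.
  have h := dotv_ge0 (s *: u - t *: v).
  rewrite !(dotvBl, dotvBr, dotvZl, dotvZr) -/p -/s -/t (dotvC v u) -/t in h.
  have e : s * (s * p - t * t) - t * (s * t - t * s) = s * (s * p - t ^+ 2) by ring.
  rewrite e pmulr_rge0 // subr_ge0 in h.
  by rewrite mulrC.
have [tle|tgt] := leP t 0.
  by apply: le_trans tle _; apply: mulr_ge0; apply: norm2_ge0.
rewrite /norm2 -/p -/s -sqrtrM //.
have : Num.sqrt (t ^+ 2) <= Num.sqrt (p * s) by rewrite ler_sqrt ?mulr_ge0.
by rewrite sqrtr_sqr gtr0_norm.
Qed.

Lemma dotv_mulmx l v (th : 'rV[R]_l) (X : 'M[R]_(l, n)) :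
  dotv v (th *m X) = \sum_(j < l) th 0 j * dotv v (row j X).
Proof.
rewrite /dotv.
under eq_bigr => k _ do rewrite mxE mulr_sumr.
rewrite exchange_big /=; apply: eq_bigr => j _; rewrite mulr_sumr.
by apply: eq_bigr => k _; rewrite mxE mulrCA.
Qed.

End L.

Section S.
Variable R : realType.
Variables (l n : nat) (x : 'I_l -> 'rV[R]_n) (y : 'I_l -> R).

Definition H (w : 'rV[R]_n) := \sum_(i < l) hinge (1 - dotv w (xbar x y i)).

Lemma primalE (C : R) w : svm_primal x y C w = dotv w w / 2 + C * H w.
Proof. by rewrite /svm_primal norm2_sq. Qed.

Lemma hinge_ge (t : R) : t <= hinge t.
Proof. by rewrite /hinge le_max lexx. Qed.
Lemma hinge_ge0 (t : R) : 0 <= hinge t.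
Proof. by rewrite /hinge le_max lexx orbT. Qed.

Lemma hinge_convex (a b al be : R) : 0 <= a -> 0 <= b ->
  hinge (a * al + b * be) <= a * hinge al + b * hinge be.
Proof.
move=> ha hb; rewrite {1}/hinge ge_max; apply/andP; split.
  by apply: lerD; apply: ler_wpM2l => //; apply: hinge_ge.
by apply: addr_ge0; apply: mulr_ge0 => //; apply: hinge_ge0.
Qed.

Lemma hinge_lb (th t : R) : 0 <= th <= 1 -> th * t <= hinge t.
Proof.
move=> /andP[h0 h1]; have [tn|tp] := leP t 0.
  by apply: le_trans (hinge_ge0 _); rewrite mulr_ge0_le0.
apply: le_trans (hinge_ge _); rewrite ler_piMl //; exact: ltW.
Qed.

Lemma H_convex (w u : 'rV[R]_n) (t : R) : 0 <= t <= 1 ->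
  H (w + t *: (u - w)) <= (1 - t) * H w + t * H u.
Proof.
move=> /andP[h0 h1]; rewrite /H !mulr_sumr -big_split /=.
apply: ler_sum => i _.
have -> : 1 - dotv (w + t *: (u - w)) (xbar x y i) =
  (1 - t) * (1 - dotv w (xbar x y i)) + t * (1 - dotv u (xbar x y i)).
  rewrite dotvDl dotvZl dotvBl; ring.
by apply: hinge_convex; rewrite ?subr_ge0.
Qed.

Lemma small_t (e q : R) : 0 < e -> 0 <= q ->
  exists t, 0 < t <= 1 /\ e * t > t ^+ 2 * q / 2.
Proof.
move=> he hq; exists (e / (q + e)).
have hqe : 0 < q + e by lra.
have ht : 0 < e / (q + e) by apply: divr_gt0.
set t := e / (q + e).
have tE : t * (q + e) = e by rewrite /t mulfVK // gt_eqF.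
split.
  by rewrite ht /= /t ler_pdivrMr // mul1r; lra.
have h2 : t * q < 2 * e.
  have : 0 < t * e by apply: mulr_gt0.
  have : t * q + t * e = e by rewrite -mulrDr tE.
  lra.
have h3 : t * (t * q) < t * (2 * e) by rewrite ltr_pM2l.
have -> : t ^+ 2 * q / 2 = t * (t * q) / 2 by ring.
lra.
Qed.

Lemma strong_conv (C : R) w : 0 <= C -> is_primal_opt x y C w ->
  forall u, svm_primal x y C w + dotv (u - w) (u - w) / 2 <= svm_primal x y C u.
Proof.
move=> hC hw u.
have [d ->] : exists d, u = w + d by exists (u - w); rewrite addrC subrK.
have -> : w + d - w = d by rewrite addrC addKr.
set q := dotv d d.
have hq : 0 <= q by apply: dotv_ge0.
have Nu : dotv (w + d) (w + d) = dotv w w + 2 * dotv w d + q.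
  rewrite !(dotvDl, dotvDr) (dotvC d w) /q; ring.
set e := C * H w - dotv w d - C * H (w + d).
have he : e <= 0.
  rewrite leNgt; apply/negP => he.
  have [t [/andP[t0 t1] ht]] := small_t _ _ he hq.
  have := hw (w + t *: d); rewrite !primalE.
  have Nt : dotv (w + t *: d) (w + t *: d) = dotv w w + 2 * t * dotv w d + t ^+ 2 * q.
    rewrite !(dotvDl, dotvDr, dotvZl, dotvZr) (dotvC d w) /q; ring.
  rewrite Nt => hopt.
  have hc : C * H (w + t *: d) <= C * ((1 - t) * H w + t * H (w + d)).
    apply: (ler_wpM2l hC).
    have hcv := @H_convex w (w + d) t.
    have e1 : w + d - w = d by rewrite addrC addKr.
    rewrite e1 in hcv; apply: hcv; by rewrite (ltW t0) t1.
  have : e * t <= t ^+ 2 * q / 2.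
    rewrite /e; lra.
  lra.
rewrite !primalE Nu /q; rewrite /e in he; lra.
Qed.

Lemma ball (C1 C2 : R) (w1 w2 : 'rV[R]_n) : 0 < C1 -> C1 < C2 ->
  is_primal_opt x y C1 w1 -> is_primal_opt x y C2 w2 ->
  forall z : 'rV[R]_n,
  let a := (C1 + C2) / (2 * C1) in let b := (C2 - C1) / (2 * C1) in
  a * dotv w1 z - b * norm2 w1 * norm2 z <= dotv w2 z /\
  dotv w2 z <= a * dotv w1 z + b * norm2 w1 * norm2 z.
Proof.
move=> h1 h12 o1 o2 z a b.
have hA := strong_conv _ _ (ltW h1) o1 w2.
have hB := strong_conv _ _ (ltW (lt_trans h1 h12)) o2 w1.
rewrite !primalE in hA hB.
set N1 := dotv w1 w1 in hA hB; set N2 := dotv w2 w2 in hA hB.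
set M := dotv w1 w2.
have D1 : dotv (w2 - w1) (w2 - w1) = N1 - 2 * M + N2.
  rewrite !(dotvBl, dotvBr) (dotvC w2 w1) /M /N1 /N2; ring.
have D2 : dotv (w1 - w2) (w1 - w2) = N1 - 2 * M + N2.
  rewrite !(dotvBl, dotvBr) (dotvC w2 w1) /M /N1 /N2; ring.
rewrite D1 in hA; rewrite D2 in hB.
set H1 := H w1 in hA hB; set H2 := H w2 in hA hB.
have key : (C1 + C2) * (N1 - 2 * M + N2) <= (C2 - C1) * (N2 - N1).
  have hA' := ler_wpM2l (ltW (lt_trans h1 h12)) hA.
  have hB' := ler_wpM2l (ltW h1) hB.
  lra.
have hb : 0 <= b by rewrite /b divr_ge0 // ?subr_ge0 ?ltW // mulr_gt0.
have hz : dotv (a *: w1 - w2) (a *: w1 - w2) <= (b * norm2 w1) ^+ 2.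
  rewrite exprMn norm2_sq -/N1.
  rewrite !(dotvBl, dotvBr, dotvZl, dotvZr) -/N1 -/N2 (dotvC w2 w1) -/M.
  have hC1 : 0 < 4 * C1 ^+ 2 by rewrite mulr_gt0 // exprn_gt0.
  rewrite -subr_ge0 -(pmulr_rge0 _ hC1).
  have -> : 4 * C1 ^+ 2 * (b ^+ 2 * N1 - (a * (a * N1 - M) - (a * M - N2))) =
     2 * C1 * ((C2 - C1) * (N2 - N1) - (C1 + C2) * (N1 - 2 * M + N2)).
    rewrite /a /b; field; rewrite gt_eqF //.
  by apply: mulr_ge0; [rewrite mulr_ge0 // ltW | rewrite subr_ge0].
have hn : norm2 (a *: w1 - w2) <= b * norm2 w1.
  have h0 : norm2 (a *: w1 - w2) \is Num.nneg by rewrite nnegrE norm2_ge0.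
  have h0' : b * norm2 w1 \is Num.nneg by rewrite nnegrE mulr_ge0 // norm2_ge0.
  rewrite -(ler_pXn2r (isT : (0 < 2)%N) h0 h0') /=.
  by rewrite norm2_sq.
have cs1 := cauchy_schwarz (a *: w1 - w2) z.
have cs2 := cauchy_schwarz (w2 - a *: w1) z.
have nE : norm2 (w2 - a *: w1) = norm2 (a *: w1 - w2).
  by rewrite /norm2 -opprB dotvNl dotvC dotvNl opprK.
rewrite nE in cs2.
rewrite dotvBl dotvZl in cs1; rewrite dotvBl dotvZl in cs2.
have hz0 := norm2_ge0 z.
have : norm2 (a *: w1 - w2) * norm2 z <= b * norm2 w1 * norm2 z by apply: ler_wpM2r.
split; lra.
Qed.

Lemma sum_e (j : 'I_l) : \sum_(k < l) ('e_j : 'rV[R]_l) 0 k = 1.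
Proof.
rewrite (bigD1 j) //= big1 ?addr0; first by rewrite mxE !eqxx.
by move=> k hk; rewrite mxE (negbTE hk) andbF.
Qed.

Lemma dual_pert (C s : R) (th : 'rV[R]_l) (j : 'I_l) :
  svm_dual x y C (th + s *: 'e_j) =
  svm_dual x y C th + s * (C * dotv (th *m Xbar x y) (xbar x y j) - 1)
   + C / 2 * s ^+ 2 * dotv (xbar x y j) (xbar x y j).
Proof.
rewrite /svm_dual !norm2_sq mulmxDl -scalemxAl -rowE -/(xbar x y j).
have -> : \sum_(i < l) (th + s *: 'e_j) 0 i = \sum_(i < l) th 0 i + s.
  rewrite -[s in RHS]mulr1 -(sum_e j) mulr_sumr -big_split /=.
  by apply: eq_bigr => k _; rewrite !mxE.
rewrite !(dotvDl, dotvDr, dotvZl, dotvZr) (dotvC (xbar x y j)).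
set P := dotv _ _; set Q := dotv (xbar x y j) _; set S := \sum_(i < l) _; set U := dotv _ (xbar x y j).
by field.
Qed.

Lemma box_pert (th : 'rV[R]_l) (j : 'I_l) (s : R) :
  in_box th -> 0 <= th 0 j + s <= 1 -> in_box (th + s *: 'e_j).
Proof.
move=> hb hj k; rewrite !mxE /=.
have [->|hk] := eqVneq k j; first by rewrite mulr1.
by rewrite mulr0 addr0; apply: hb.
Qed.

Lemma neg_step (A G Q : R) : 0 < A -> 0 < G -> 0 <= Q ->
  exists t, 0 < t <= A /\ Q * t < G.
Proof.
move=> hA hG hQ; exists (A * G / (A * Q + G)).
have hd : 0 < A * Q + G by rewrite ltr_wpDl // mulr_ge0 // ltW.
have ht : 0 < A * G / (A * Q + G) by rewrite divr_gt0 // mulr_gt0.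
set t := A * G / (A * Q + G).
have tE : t * (A * Q + G) = A * G by rewrite /t mulfVK // gt_eqF.
split.
  rewrite ht /=.
  rewrite /t ler_pdivrMr //; rewrite mulrDr.
  have : 0 <= A * (A * Q) by rewrite !mulr_ge0 // ltW.
  lra.
have h1 : 0 < t * G by rewrite mulr_gt0.
have h2 : A * (Q * t) < A * G.
  have -> : A * (Q * t) = A * G - t * G by rewrite -tE; ring.
  lra.
by rewrite ltr_pM2l in h2.
Qed.

Lemma dual_kkt (C : R) (th : 'rV[R]_l) (j : 'I_l) : 0 < C ->
  is_dual_opt x y C th ->
  let g := C * dotv (th *m Xbar x y) (xbar x y j) - 1 in
  (th 0 j < 1 -> 0 <= g) /\ (0 < th 0 j -> g <= 0).
Proof.
move=> hC [hb hopt] g.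
set q := dotv (xbar x y j) (xbar x y j).
have hq : 0 <= q by apply: dotv_ge0.
have hQ : 0 <= C * q by rewrite mulr_ge0 // ltW.
have hj := hb j; move/andP: hj => [hj0 hj1].
split.
  move=> hlt; rewrite leNgt; apply/negP => hg.
  have hA : 0 < 1 - th 0 j by rewrite subr_gt0.
  have hG : 0 < - g by rewrite oppr_gt0.
  have [t [/andP[t0 tA] tQ]] := neg_step _ _ _ hA hG hQ.
  have hbox : in_box (th + t *: 'e_j).
    by apply: box_pert => //; apply/andP; split; lra.
  have := hopt _ hbox; rewrite dual_pert -/g -/q.
  have e : t * g + C / 2 * t ^+ 2 * q = t * (g + C * q * t / 2) by field.
  rewrite -addrA e lerDl.
  have h : g + C * q * t / 2 < 0 by lra.
  by rewrite pmulr_rge0 // leNgt h.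
move=> hpos; rewrite leNgt; apply/negP => hg.
have [t [/andP[t0 tA] tQ]] := neg_step _ _ _ hpos hg hQ.
have hbox : in_box (th + (- t) *: 'e_j).
  by apply: box_pert => //; apply/andP; split; lra.
have := hopt _ hbox; rewrite dual_pert -/g -/q.
have e : (- t) * g + C / 2 * (- t) ^+ 2 * q = - (t * (g - C * q * t / 2)) by field.
rewrite -addrA e lerDl oppr_ge0.
have h : 0 < g - C * q * t / 2 by lra.
by rewrite pmulr_rle0 // leNgt h.
Qed.

Lemma dual_to_primal (C : R) (th : 'rV[R]_l) : 0 < C -> is_dual_opt x y C th ->
  is_primal_opt x y C (C *: (th *m Xbar x y)).
Proof.
move=> hC hd; have [hb _] := hd.
set w := C *: (th *m Xbar x y).
have hj : forall j, hinge (1 - dotv w (xbar x y j)) = th 0 j * (1 - dotv w (xbar x y j)).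
  move=> j; have [k1 k2] := dual_kkt _ _ j hC hd.
  have gE : C * dotv (th *m Xbar x y) (xbar x y j) - 1 = dotv w (xbar x y j) - 1.
    by rewrite /w dotvZl.
  rewrite gE in k1 k2.
  have /andP[h0 h1] := hb j.
  rewrite /hinge.
  have [t1|t1] := eqVneq (th 0 j) 1.
    rewrite t1 mul1r max_l //; have := k2 (ltac:(by rewrite t1 ltr01)); lra.
  have tl : th 0 j < 1 by rewrite lt_def eq_sym t1 h1.
  have g0 := k1 tl.
  have [t0|t0] := eqVneq (th 0 j) 0.
    by rewrite t0 mul0r max_r // subr_le0 -subr_ge0.
  have tp : 0 < th 0 j by rewrite lt_def t0 h0.
  have g1 := k2 tp.
  have -> : 1 - dotv w (xbar x y j) = 0 by lra.
  by rewrite mulr0 max_r.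
have sumE : forall v, \sum_(j < l) th 0 j * (1 - dotv v (xbar x y j)) =
    \sum_(j < l) th 0 j - dotv v (th *m Xbar x y).
  move=> v; rewrite dotv_mulmx -sumrB; apply: eq_bigr => j _.
  rewrite /xbar; ring.
have Hw : H w = \sum_(j < l) th 0 j - dotv w (th *m Xbar x y).
  by rewrite /H (eq_bigr _ (fun j _ => hj j)) sumE.
move=> v; rewrite !primalE.
have Hv : \sum_(j < l) th 0 j - dotv v (th *m Xbar x y) <= H v.
  rewrite -sumE; apply: ler_sum => j _; apply: hinge_lb; exact: hb.
have Cv := ler_wpM2l (ltW hC) Hv.
rewrite Hw.
have N : 0 <= dotv (v - w) (v - w) by apply: dotv_ge0.
rewrite !(dotvBl, dotvBr) (dotvC w v) in N.
have e1 : dotv w w = C * dotv w (th *m Xbar x y) by rewrite {2}/w dotvZr.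
have e2 : dotv v w = C * dotv v (th *m Xbar x y) by rewrite /w dotvZr.
lra.
Qed.

Lemma dual_primal_eq (C : R) (th : 'rV[R]_l) (w : 'rV[R]_n) : 0 < C ->
  is_dual_opt x y C th -> is_primal_opt x y C w ->
  C *: (th *m Xbar x y) = w.
Proof.
move=> hC hd hw.
have o := dual_to_primal _ _ hC hd.
have := strong_conv _ _ (ltW hC) hw (C *: (th *m Xbar x y)).
have := o w.
set u := C *: (th *m Xbar x y) => h1 h2.
have h3 : dotv (u - w) (u - w) <= 0 by lra.
have h4 : dotv (u - w) (u - w) = 0 by apply/le_anti; rewrite h3 dotv_ge0.
by apply/eqP; rewrite -subr_eq0; apply/eqP; apply: dotv_eq0.
Qed.

End S.

Theorem corollary4 (R : realType) (l n : nat)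
    (x : 'I_l -> 'rV[R]_n) (y : 'I_l -> R)
    (hy : forall i, y i = 1 \/ y i = -1)
    (K : nat) (Cs : nat -> R)
    (hC1 : 0 < Cs 1%N)
    (hCinc : forall j : nat, (1 <= j)%N -> (j < K)%N -> Cs j < Cs j.+1)
    (k : nat) (hk1 : (1 <= k)%N) (hkK : (k < K)%N)
    (wk : 'rV[R]_n) (hwk : is_primal_opt x y (Cs k) wk)
    (wk1 : 'rV[R]_n) (hwk1 : is_primal_opt x y (Cs k.+1) wk1)
    (i : 'I_l) :
  let a := (Cs k + Cs k.+1) / (2 * Cs k) in
  let b := (Cs k.+1 - Cs k) / (2 * Cs k) in
  (a * dotv wk (xbar x y i) - b * norm2 wk * norm2 (xbar x y i) > 1 ->
     (forall th : 'rV[R]_l, is_dual_opt x y (Cs k.+1) th -> th 0 i = 0)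
     /\ dotv wk1 (xbar x y i) > 1)
  /\
  (a * dotv wk (xbar x y i) + b * norm2 wk * norm2 (xbar x y i) < 1 ->
     (forall th : 'rV[R]_l, is_dual_opt x y (Cs k.+1) th -> th 0 i = 1)
     /\ dotv wk1 (xbar x y i) < 1).
Proof.
move=> a b.
have pos : forall j, (1 <= j)%N -> (j <= K)%N -> 0 < Cs j.
  elim=> [//|j IH] hj hjK.
  case: j IH hj hjK => [|j] IH hj hjK; first exact: hC1.
  apply: lt_trans (IH isT (ltnW hjK)) _; exact: hCinc.
have hk : 0 < Cs k by apply: pos => //; exact: ltnW.
have hkk : Cs k < Cs k.+1 by exact: hCinc.
have hk' : 0 < Cs k.+1 by exact: lt_trans hkk.
have [bl br] := @ball R l n x y _ _ _ _ hk hkk hwk hwk1 (xbar x y i).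
have eqw : forall th, is_dual_opt x y (Cs k.+1) th ->
    Cs k.+1 * dotv (th *m Xbar x y) (xbar x y i) - 1 = dotv wk1 (xbar x y i) - 1.
  move=> th hd; rewrite -dotvZl (@dual_primal_eq R l n x y _ _ _ hk' hd hwk1) //.
split=> hcond.
  have hw : 1 < dotv wk1 (xbar x y i) by rewrite -/a -/b in bl; lra.
  split => // th hd.
  have [_ k2] := @dual_kkt R l n x y _ _ i hk' hd; rewrite eqw // in k2.
  have /andP[h0 _] := (hd.1 i).
  apply/le_anti; rewrite h0 andbT leNgt; apply/negP => hp.
  have := k2 hp; lra.
have hw : dotv wk1 (xbar x y i) < 1 by rewrite -/a -/b in br; lra.
split => // th hd.
have [k1 _] := @dual_kkt R l n x y _ _ i hk' hd; rewrite eqw // in k1.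
have /andP[_ h1] := (hd.1 i).
apply/le_anti; rewrite h1 /= leNgt; apply/negP => hp.
have := k1 hp; lra.
Qed.
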